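(* Consider the class of three-valued logics (as defined in the context) that are paraconsistent and have properties (a) and (b). There are exactly 16 logics in this class whose logical equivalence relation $\equiv$ satisfies, for all formulas $A,B$, all of the following: (1) $A\wedge\bot \equiv \bot$; (2) $A\vee\top\equiv\top$; (3) $A\wedge\top\equiv A$; (4) $A\vee\bot\equiv A$; (5) $A\wedge A\equiv A$; (6) $A\vee A\equiv A$; (7) $A\wedge B\equiv B\wedge A$; (8) $A\vee B\equiv B\vee A$; (9) $\neg\neg A\equiv A$.
   Context: Formulas are built from a countably infinite set of propositional variables, the constant $\bot$, the unary connective $\neg$ and the binary connectives $\wedge,\vee,\to$; $\top$ abbreviates $\neg\bot$. Let $V=\{t,f,b\}$. A three-valued logic is specified by truth functions $\neg^M:V\to V$ and $\wedge^M,\vee^M,\to^M:V^2\to V$ that agree with the classical truth functions of negation, conjunction, disjunction and material implication on $\{t,f\}$, with $\bot$ interpreted as $f$; two logics are different iff at least one of these truth functions differs. A valuation is a map $\nu$ from formulas to $V$ with $\nu(\bot)=f$, $\nu(\neg A)=\neg^M(\nu(A))$, $\nu(A\wedge B)=\wedge^M(\nu(A),\nu(B))$, and similarly for $\vee,\to$ (values on propositional variables are arbitrary). The designated values are $t$ and $b$: $\Gamma\models A$ iff for every valuation $\nu$, either $\nu(A')=f$ for some $A'\in\Gamma$ or $\nu(A)\in\{t,b\}$. The logic is paraconsistent if there are formulas $A,B$ with $\{A,\neg A\}\not\models B$. Its logical equivalence relation is: $A\equiv B$ iff $\nu(A)=\nu(B)$ for every valuation $\nu$. Property (a): for every set of formulas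 $\Gamma$ and formula $A$, $\Gamma\models A$ implies $\Gamma\models_{\mathrm{CPL}}A$, where $\models_{\mathrm{CPL}}$ is the consequence relation of classical propositional logic (with $\bot$ false, $\to$ material implication). Property (b): for all sets $\Gamma$ and formulas $A,B,C$: (b1) $\Gamma\cup\{A\}\models B$ iff $\Gamma\models A\to B$; (b2) $\Gamma\models A\wedge B$ iff $\Gamma\models A$ and $\Gamma\models B$; (b3) $\Gamma\cup\{A\vee B\}\models C$ iff $\Gamma\cup\{A\}\models C$ and $\Gamma\cup\{B\}\models C$. *)

(* Defs.v *)
From HB Require Import structures.
From mathcomp Require Import all_boot.
Set Implicit Arguments. Unset Strict Implicit. Unset Printing Implicit Defensive.

Inductive V := Vt | Vf | Vb.

Definition V_to_ord (x : V) : 'I_3 :=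
  match x with Vt => inord 0 | Vf => inord 1 | Vb => inord 2 end.
Definition ord_to_V (i : 'I_3) : V :=
  match val i with 0 => Vt | 1 => Vf | _ => Vb end.
Lemma V_ordK : cancel V_to_ord ord_to_V.
Proof. by case; rewrite /ord_to_V /= inordK. Qed.
HB.instance Definition _ := Equality.copy V (can_type V_ordK).
HB.instance Definition _ := Finite.copy V (can_type V_ordK).

Definition b2V (x : bool) : V := if x then Vt else Vf.

(* A three-valued "logic" (candidate): the four truth functions,
   negation, conjunction, disjunction, implication.
   Two logics are equal iff all four truth functions coincide. *)
Definition logic : Type :=
  ({ffun V -> V} * {ffun V * V -> V} * {ffun V * V -> V} * {ffun V * V -> V})%type.

Definition lneg  (L : logic) (x : V) : V := L.1.1.1 x.
Definition lconj (L : logic) (x y : V) : V := L.1.1.2 (x, y).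
Definition ldisj (L : logic) (x y : V) : V := L.1.2 (x, y).
Definition limp  (L : logic) (x y : V) : V := L.2 (x, y).

Definition classical_agree (L : logic) : Prop :=
  forall x y : bool,
    [/\ lneg L (b2V x) = b2V (~~ x),
        lconj L (b2V x) (b2V y) = b2V (x && y),
        ldisj L (b2V x) (b2V y) = b2V (x || y)
      & limp L (b2V x) (b2V y) = b2V (x ==> y)].

Inductive form :=
  | Var of nat
  | Bot
  | Neg of form
  | And of form & form
  | Or of form & form
  | Imp of form & form.

Definition Top : form := Neg Bot.

Fixpoint eval (L : logic) (v : nat -> V) (A : form) : V :=
  match A with
  | Var n => v n
  | Bot => Vf
  | Neg B => lneg L (eval L v B)
  | And B C => lconj L (eval L v B) (eval L v C)
  | Or B C => ldisj L (eval L v B) (eval L v C)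
  | Imp B C => limp L (eval L v B) (eval L v C)
  end.

Definition designated (x : V) : Prop := x = Vt \/ x = Vb.

Definition conseq (L : logic) (G : form -> Prop) (A : form) : Prop :=
  forall v : nat -> V,
    (exists A', G A' /\ eval L v A' = Vf) \/ designated (eval L v A).

Fixpoint ceval (w : nat -> bool) (A : form) : bool :=
  match A with
  | Var n => w n
  | Bot => false
  | Neg B => ~~ ceval w B
  | And B C => ceval w B && ceval w C
  | Or B C => ceval w B || ceval w C
  | Imp B C => ceval w B ==> ceval w C
  end.

Definition cpl_conseq (G : form -> Prop) (A : form) : Prop :=
  forall w : nat -> bool, (forall A', G A' -> ceval w A' = true) -> ceval w A = true.

Definition add1 (G : form -> Prop) (A : form) : form -> Prop :=
  fun C => G C \/ C = A.

Definition paraconsistent (L : logic) : Prop :=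
  exists A B : form, ~ conseq L (fun C => C = A \/ C = Neg A) B.

Definition prop_a (L : logic) : Prop :=
  forall G A, conseq L G A -> cpl_conseq G A.

Definition prop_b (L : logic) : Prop :=
  forall (G : form -> Prop) (A B C : form),
    [/\ (conseq L (add1 G A) B <-> conseq L G (Imp A B)),
        (conseq L G (And A B) <-> (conseq L G A /\ conseq L G B))
      & (conseq L (add1 G (Or A B)) C <-> (conseq L (add1 G A) C /\ conseq L (add1 G B) C))].

Definition lequiv (L : logic) (A B : form) : Prop :=
  forall v : nat -> V, eval L v A = eval L v B.

Definition in_class (L : logic) : Prop :=
  [/\ classical_agree L, paraconsistent L, prop_a L & prop_b L].

Definition equiv_laws (L : logic) : Prop :=
  forall A B : form,
    [/\ lequiv L (And A Bot) Bot,
        lequiv L (Or A Top) Top,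
        lequiv L (And A Top) A,
        lequiv L (Or A Bot) A
      & lequiv L (And A A) A] /\
    [/\ lequiv L (Or A A) A,
        lequiv L (And A B) (And B A),
        lequiv L (Or A B) (Or B A)
      & lequiv L (Neg (Neg A)) A].

(* Main.v *)
Require Import Defs.
From mathcomp Require Import all_boot.
From Stdlib Require Import Classical.

Set Implicit Arguments. Unset Strict Implicit. Unset Printing Implicit Defensive.

Definition negf (x : V) : V := match x with Vt => Vf | Vf => Vt | Vb => Vb end.
Definition conjf (x y : V) : V :=
  match x, y with
  | Vf, _ | _, Vf => Vf
  | Vt, Vt => Vt
  | _, _ => Vb end.
Definition disjf (x y : V) : V :=
  match x, y with
  | Vt, _ | _, Vt => Vt
  | Vf, Vf => Vf
  | _, _ => Vb end.
Definition impf (a b c d x y : V) : V :=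
  match x, y with
  | Vt, Vt => Vt | Vt, Vf => Vf | Vt, Vb => c
  | Vf, Vt => Vt | Vf, Vf => Vt | Vf, Vb => d
  | Vb, Vt => a | Vb, Vb => b | Vb, Vf => Vf end.

Definition mk (a b c d : V) : logic :=
  ([ffun x => negf x], [ffun p : V * V => conjf p.1 p.2],
   [ffun p : V * V => disjf p.1 p.2], [ffun p : V * V => impf a b c d p.1 p.2]).

Definition des (x : V) : bool := if x is Vf then false else true.

Lemma designatedE x : designated x <-> des x.
Proof.
rewrite /designated /des; case: x; split => //; try by [left|right].
by case.
Qed.

Lemma conseqE L G A : conseq L G A <->
  forall v, (forall A', G A' -> des (eval L v A')) -> des (eval L v A).
Proof.
split.
- move=> H v hG; case: (H v) => [[A' [GA e]]|/designatedE //].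
  by have := hG A' GA; rewrite e.
- move=> H v.
  case: (classic (exists A', G A' /\ eval L v A' = Vf)) => [h|h]; first by left.
  right; apply/designatedE; apply: H => A' GA; case E: (eval L v A') => //.
  by exfalso; apply: h; exists A'.
Qed.

Section Good.
Variables (L : logic) (a b c d : V).
Hypotheses (Hn : forall x, lneg L x = negf x)
  (Hc : forall x y, lconj L x y = conjf x y)
  (Hd : forall x y, ldisj L x y = disjf x y)
  (Hi : forall x y, limp L x y = impf a b c d x y)
  (Ha : des a) (Hb : des b) (Hcc : des c) (Hdd : des d).

Lemma ca_good : classical_agree L.
Proof. by move=> [] []; rewrite /= Hn Hc Hd Hi. Qed.

Lemma desI x y : des (limp L x y) = ~~ des x || des y.
Proof. by rewrite Hi; case: x; case: y => //=. Qed.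
Lemma desC x y : des (lconj L x y) = des x && des y.
Proof. by rewrite Hc; case: x; case: y. Qed.
Lemma desD x y : des (ldisj L x y) = des x || des y.
Proof. by rewrite Hd; case: x; case: y. Qed.

Lemma evalb w A : eval L (fun n => b2V (w n)) A = b2V (ceval w A).
Proof.
elim: A => [n||B IH|B IHB C IHC|B IHB C IHC|B IHB C IHC] //=;
  rewrite ?IH ?IHB ?IHC; case: (ceval w B); try case: (ceval w C);
  by rewrite ?Hn ?Hc ?Hd ?Hi.
Qed.

Lemma pa_good : prop_a L.
Proof.
move=> G A H w hw; case: (H (fun n => b2V (w n))) => [[A' [GA e]]|].
- by move: e; rewrite evalb (hw A' GA).
- by rewrite evalb; case: (ceval w A) => //; case.
Qed.

Lemma para_good : paraconsistent L.
Proof.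
exists (Var 0), (Var 1) => H.
case: (H (fun n => if n is 0 then Vb else Vf)) => [[A' [[->|->] e]]|[]] //.
by move: e; rewrite /= Hn.
Qed.

Lemma pb_good : prop_b L.
Proof.
move=> G A B C; split; rewrite !conseqE.
- split=> H v hG.
  + rewrite desI; case dA: (des (eval L v A)) => //=; apply: H => A' [/hG //|->//].
  + have := H v (fun A' GA => hG A' (or_introl GA)); rewrite /= desI.
    by rewrite (hG A (or_intror erefl)).
- split.
  + by move=> H; split=> v hG; have := H v hG; rewrite /= desC => /andP[].
  + by move=> [H1 H2] v hG; rewrite /= desC (H1 v hG) (H2 v hG).
- split.
  + move=> H; split=> v hG; apply: H => A' [/(fun h => hG _ (or_introl h)) //|->];
      rewrite /= desD; by rewrite (hG _ (or_intror erefl)) ?orbT.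
  + move=> [H1 H2] v hG; have := hG _ (or_intror erefl); rewrite /= desD.
    case/orP => h.
    * by apply: H1 => A' [/(fun h => hG _ (or_introl h)) //|->].
    * by apply: H2 => A' [/(fun h => hG _ (or_introl h)) //|->].
Qed.

Lemma laws_good : equiv_laws L.
Proof.
move=> A B; split; split => v /=; rewrite ?Hn ?Hc ?Hd;
  by case: (eval L v A); try case: (eval L v B).
Qed.

Lemma good_in : in_class L /\ equiv_laws L.
Proof.
split; last exact: laws_good.
split; [exact: ca_good|exact: para_good|exact: pa_good|exact: pb_good].
Qed.
End Good.

Lemma mk_good a b c d : des a -> des b -> des c -> des d ->
  in_class (mk a b c d) /\ equiv_laws (mk a b c d).
Proof.
move=> Ha Hb Hc Hd; apply: (@good_in _ a b c d) => //; move=> *;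
  by rewrite /lneg /lconj /ldisj /limp /= ffunE.
Qed.

Definition vv (x y : V) : nat -> V := fun n => if n is 0 then x else y.

Lemma conseq_mem L G A : G A -> conseq L G A.
Proof.
move=> GA v; case E: (eval L v A); [right; left| left; exists A | right; right] => //.
Qed.

Lemma class_tables L : in_class L -> equiv_laws L ->
  [/\ forall x, lneg L x = negf x,
      forall x y, lconj L x y = conjf x y,
      forall x y, ldisj L x y = disjf x y
    & forall x y, limp L x y = impf (limp L Vb Vt) (limp L Vb Vb) (limp L Vt Vb) (limp L Vf Vb) x y]
  /\ [/\ des (limp L Vb Vt), des (limp L Vb Vb), des (limp L Vt Vb) & des (limp L Vf Vb)].
Proof.
case=> Hca Hpa _ Hpb Hlaw.
have [[e1 e2 e3 e4 e5] [e6 e7 e8 e9]] := Hlaw (Var 0) (Var 1).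
have nt : lneg L Vt = Vf by case: (Hca true true).
have nf : lneg L Vf = Vt by case: (Hca false true).
have nb : lneg L Vb = Vb.
  have := e9 (vv Vb Vb); rewrite /=.
  by case E: (lneg L Vb) => //; rewrite ?nt ?nf.
have l1 := e1 (vv Vb Vb); have l2 := e2 (vv Vb Vb); have l3 := e3 (vv Vb Vb).
have l4 := e4 (vv Vb Vb); have l5 := e5 (vv Vb Vb); have l6 := e6 (vv Vb Vb).
rewrite /= nf in l1 l2 l3 l4 l5 l6.
have l7 x y : lconj L x y = lconj L y x by exact: (e7 (vv x y)).
have l8 x y : ldisj L x y = ldisj L y x by exact: (e8 (vv x y)).
have ibf : limp L Vb Vf = Vf.
  case E: (limp L Vb Vf) => //; exfalso;
  have := (Hpb (fun C => C = Imp (Var 0) (Var 1)) (Var 0) (Var 1) (Var 0));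
  case=> [[_ H] _ _]; have := H (conseq_mem _ erefl) (vv Vb Vf);
  by case => [[A' [[->|->] /=]]|[]] //=; rewrite E.
have ides x y : des y -> des (limp L x y).
  move=> dy; have := (Hpb (fun C => C = Var 1) (Var 0) (Var 1) (Var 0));
  case=> [[H _] _ _]; have := H (conseq_mem _ (or_introl erefl)) (vv x y).
  case => [[A' [-> /= e]]|/designatedE //]; by rewrite e in dy.
split; last by split; apply: ides.
split.
- by case.
- by case; case => //=; rewrite ?l1 ?l3 ?l5 // ?(l7 _ Vb) ?l1 ?l3 //;
    solve [case: (Hca true true) => *; assumption | case: (Hca true false) => *; assumption | case: (Hca false true) => *; assumption | case: (Hca false false) => *; assumption].
- by case; case => //=; rewrite ?l2 ?l4 ?l6 // ?(l8 _ Vb) ?l2 ?l4 //;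
    solve [case: (Hca true true) => *; assumption | case: (Hca true false) => *; assumption | case: (Hca false true) => *; assumption | case: (Hca false false) => *; assumption].
- by case; case => //=;
    solve [case: (Hca true true) => *; assumption | case: (Hca true false) => *; assumption | case: (Hca false true) => *; assumption | case: (Hca false false) => *; assumption].
Qed.


Definition mk4 (t : V * V * V * V) : logic := mk t.1.1.1 t.1.1.2 t.1.2 t.2.

Definition s0 : seq (V * V * V * V) :=
  [:: (Vt,Vt,Vt,Vt); (Vt,Vt,Vt,Vb); (Vt,Vt,Vb,Vt); (Vt,Vt,Vb,Vb);
      (Vt,Vb,Vt,Vt); (Vt,Vb,Vt,Vb); (Vt,Vb,Vb,Vt); (Vt,Vb,Vb,Vb);
      (Vb,Vt,Vt,Vt); (Vb,Vt,Vt,Vb); (Vb,Vt,Vb,Vt); (Vb,Vt,Vb,Vb);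
      (Vb,Vb,Vt,Vt); (Vb,Vb,Vt,Vb); (Vb,Vb,Vb,Vt); (Vb,Vb,Vb,Vb)].

Definition s16 : seq logic := map mk4 s0.

Lemma mk4_inj : injective mk4.
Proof.
move=> [[[a b] c] d] [[[a' b'] c'] d'] /= E.
have := congr1 (fun L => limp L Vb Vt) E; have := congr1 (fun L => limp L Vb Vb) E.
have := congr1 (fun L => limp L Vt Vb) E; have := congr1 (fun L => limp L Vf Vb) E.
by rewrite /limp /= !ffunE /= => -> -> -> ->.
Qed.

Definition code (x : V) : nat := match x with Vt => 0 | Vf => 1 | Vb => 2 end.
Lemma code_inj : injective code. Proof. by case; case. Qed.
Definition enc4 (t : V * V * V * V) : nat * nat * nat * nat :=
  (code t.1.1.1, code t.1.1.2, code t.1.2, code t.2).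
Lemma enc4_inj : injective enc4.
Proof.
move=> [[[a b] c] d] [[[a' b'] c'] d'] [] /code_inj -> /code_inj -> /code_inj -> /code_inj -> //.
Qed.

Lemma s0_uniq : uniq s0.
Proof. by rewrite -(map_inj_uniq enc4_inj). Qed.

Lemma s16_uniq : uniq s16.
Proof. by rewrite map_inj_uniq ?s0_uniq //; exact: mk4_inj. Qed.

Lemma s16_size : size s16 = 16.
Proof. by rewrite size_map. Qed.

Lemma mk_in a b c d : des a -> des b -> des c -> des d -> mk a b c d \in s16.
Proof.
move=> Ha Hb Hc Hd; rewrite (_ : mk a b c d = mk4 (a, b, c, d)) // mem_map; last exact: mk4_inj.
rewrite -(mem_map enc4_inj).
by case: a Ha => //; case: b Hb => //; case: c Hc => //; case: d Hd.
Qed.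

Lemma in_s16 L : L \in s16 -> in_class L /\ equiv_laws L.
Proof.
case/mapP => t Ht ->.
have : all (fun t : V * V * V * V => [&& des t.1.1.1, des t.1.1.2, des t.1.2 & des t.2]) s0 by [].
move/allP/(_ t Ht) => /and4P [*]; exact: mk_good.
Qed.

Theorem corollary1 :
  exists s : seq logic,
    [/\ uniq s, size s = 16
      & forall L : logic, (in_class L /\ equiv_laws L) <-> L \in s].
Proof.
exists s16; split; [exact: s16_uniq|exact: s16_size|] => L; split; last exact: in_s16.
case=> H1 H2; have [[Hn Hc Hd Hi] [da db dc dd]] := class_tables H1 H2.
suff -> : L = mk (limp L Vb Vt) (limp L Vb Vb) (limp L Vt Vb) (limp L Vf Vb) by apply: mk_in.
move: Hn Hc Hd Hi; clear H1 H2 da db dc dd; rewrite /lneg /lconj /ldisj /limp.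
case: L => [[[n cj] dj] im] /= Hn Hc Hd Hi.
rewrite /mk; congr (_, _, _, _); apply/ffunP; [move=> x|move=> [x y]..]; by rewrite ffunE.
Qed.
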